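(* Let $P_1,P_2\in\hat E_n$ both satisfy condition $A_1$. Then $P_1P_2$ satisfies condition $A_1$ and $\mathrm{ord}_\Gamma(P_1P_2)=\mathrm{ord}_\Gamma(P_1)+\mathrm{ord}_\Gamma(P_2)$.
   Context: Let $K$ be a field of characteristic $0$, $n\ge1$, $m\ge0$, $K_y:=K[[y_1,\dots,y_m]]$ ($K_y=K$ if $m=0$), $\hat R_y:=K_y[[x_1,\dots,x_n]]$ with maximal ideal $\mathfrak m=(y_1,\dots,y_m,x_1,\dots,x_n)$ and $\mathfrak m$-adic order $\upsilon$. Multi-index notation $\underline\partial^{\underline k}=\partial_1^{k_1}\cdots\partial_n^{k_n}$, $|\underline k|=\sum k_j$. For a formal series $P=\sum_{\underline k}a_{\underline k}\underline\partial^{\underline k}$ ($a_{\underline k}\in\hat R_y$) put $\mathbf{ord}(P)=\sup_{\underline k}(|\underline k|-\upsilon(a_{\underline k}))$, $\mathbf{ord}(0)=-\infty$; $\hat D_n^{sym}$ is the ring of such series with $\mathbf{ord}<\infty$ (multiplication by the Leibniz rule, $\partial_i=\partial/\partial x_i$, $y_j$ central), extending the ring of differential operators $D_n=\hat R_y[\partial_1,\dots,\partial_n]$. Let $\hat D_n^n\subset\hat D_n^{sym}$ be the subring of operators not involving $\partial_n$, and $\hat E_n:=\hat D_n^n((\partial_n^{-1}))$ the ring of series $\sum_{s\le l}p_s\partial_n^s$ ($p_s\in\hat D_n^n$) with multiplication given by $\partial_n^s a=\sum_{j\ge0}\binom{s}{j}\partial_n^j(a)\partial_n^{s-j}$; $\mathbf{ord}$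 is defined on $\hat E_n$ by the same formula (now $k_n\in\mathbb Z$). $\Gamma$-order: for $1\le i\le n$ let $\hat D^{(i)}$ be the elements of $\hat D_n^{sym}$ not involving $\partial_{i+1},\dots,\partial_n$, and $\hat D^{(0)}=\hat R_y$; nonzero elements of $\hat D^{(0)}$ have empty $\Gamma$-order and are their own highest coefficient. A nonzero $P\in\hat D^{(i)}$ ($1\le i\le n-1$) has $\Gamma$-order $(k_1,\dots,k_i)$ if $P=\sum_{s=0}^{k_i}p_s\partial_i^s$ is a polynomial in $\partial_i$ with $p_s\in\hat D^{(i-1)}$, $p_{k_i}\neq0$, and $p_{k_i}$ has $\Gamma$-order $(k_1,\dots,k_{i-1})$; its highest coefficient is that of $p_{k_i}$. An element $P=\sum_{s\le k_n}p_s\partial_n^s\in\hat E_n$ with $p_{k_n}\ne0$ has $\mathrm{ord}_\Gamma(P)=(k_1,\dots,k_n)$ if $p_{k_n}$ has $\Gamma$-order $(k_1,\dots,k_{n-1})$; its highest coefficient is that of $p_{k_n}$, and $P$ is monic if this is $1$. ($\mathrm{ord}_\Gamma$ is only defined on some elements.) $|\mathrm{ord}_\Gamma(P)|:=k_1+\dots+k_n$. $P$ satisfies condition $A_1$ if $\mathrm{ord}_\Gamma(P)$ is defined and $\mathbf{ord}(P)\le|\mathrm{ord}_\Gamma(P)|$. *)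

(* Defs.v *)
From HB Require Import structures.
From mathcomp Require Import all_boot all_order all_algebra.
From mathcomp Require Import boolp classical_sets fsbigop.
Set Implicit Arguments. Unset Strict Implicit. Unset Printing Implicit Defensive.
Import Order.TTheory GRing.Theory Num.Theory.
Local Open Scope ring_scope.

Definition mon (p : nat) := {ffun 'I_p -> nat}.
(* Index k of a differential monomial d_1^k_1 ... d_n^k_n, with k_j in Z
   (only k_n may be negative for elements of E_n). *)
Definition idx (n : nat) := {ffun 'I_n -> int}.

Section Defs.
Variables (K : fieldType) (m n : nat).

(* An element of \hat R_y = K[[y_1..y_m]][[x_1..x_n]]: its coefficient
   at y^beta x^alpha. *)
Definition series := mon m -> mon n -> K.
Definition zero_series : series := fun _ _ => 0.

(* A formal operator sum_k a_k d^k, given by its coefficient family. *)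
Definition op := idx n -> series.
Definition zero_op : op := fun _ => zero_series.

Definition mdeg (p : nat) (b : mon p) : nat := \sum_(j < p) b j.
Definition tdeg (b : mon m) (a : mon n) : nat := (mdeg b + mdeg a)%N.
Definition idx_abs (k : idx n) : int := \sum_(j < n) k j.
Definition idx_add (k1 k2 : idx n) : idx n := [ffun j => k1 j + k2 j].

(* m-adic order upsilon of a nonzero series (value irrelevant for 0,
   which is only used through the nonzero case below). *)
Definition upsilon (a : series) : nat :=
  match pselect (exists d : nat, `[< exists b c, tdeg b c = d /\ a b c != 0 >]) with
  | left h => ex_minn h
  | right _ => 0%N
  end.

(* ord(P) <= N, where ord(P) = sup_k (|k| - upsilon(a_k)), with
   zero coefficients contributing -oo (so ord 0 = -oo). *)
Definition ord_le (P : op) (N : int) : Prop :=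
  forall k : idx n, P k <> zero_series -> idx_abs k - (upsilon (P k))%:Z <= N.

(* coefficient of d_t^s in Q, as an operator not involving d_t *)
Definition coef_d (Q : op) (t : 'I_n) (s : int) : op :=
  fun l : idx n => if l t == 0 then Q [ffun j => if j == t then s else l j]
           else zero_series.

(* Membership in \hat E_n = \hat D_n^n((d_n^{-1})):
   - exponents of d_1..d_{n-1} are nonnegative,
   - exponents of d_n are bounded above,
   - every coefficient p_s of d_n^s lies in \hat D_n^n (finite ord). *)
Definition inE (P : op) : Prop :=
  [/\ forall (l : idx n) (t : 'I_n), (t < n.-1)%N -> l t < 0 -> P l = zero_series,
      exists L : int, forall (l : idx n) (t : 'I_n), val t = n.-1 -> L < l t ->
                         P l = zero_series
    & forall (t : 'I_n), val t = n.-1 -> forall s : int,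
          exists N : int, ord_le (coef_d P t s) N].

(* Gamma-order, by recursion on the level i: Q in D^{(i)} has Gamma-order
   (k_1..k_i) if all coefficients of d_i^s with s > k_i vanish and the
   coefficient of d_i^{k_i} has Gamma-order (k_1..k_{i-1});
   at level 0 the element must be nonzero. *)
Fixpoint hasOrdG (i : nat) (Q : op) (k : idx n) : Prop :=
  match i with
  | 0 => Q <> zero_op
  | i'.+1 => forall t : 'I_n, val t = i' ->
       (forall s : int, k t < s -> coef_d Q t s = zero_op) /\
       hasOrdG i' (coef_d Q t (k t)) k
  end.

Definition ordG (P : op) (k : idx n) : Prop := inE P /\ hasOrdG n P k.

Definition A1 (P : op) : Prop := exists k, ordG P k /\ ord_le P (idx_abs k).

Definition gbinom (s : int) (i : nat) : K :=
  (\prod_(t < i) ((s - t%:Z)%:~R : K)) / (i`!)%:R.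

Definition index4 : choiceType :=
  (idx n * {ffun 'I_n -> nat} * mon m * mon n)%type.

(* Product in \hat E_n:
   (sum_k a_k d^k)(sum_l b_l d^l) = sum_{k,l,i} a_k prod_j binom(k_j,i_j) d^i(b_l) d^{k-i+l}.
   Coefficient at d^r y^beta x^alpha; d^i(b) has coefficient
   b(beta2, alpha2+i) * prod_j (alpha2_j+i_j)^_(i_j) at y^beta2 x^alpha2.
   The sum has finite support for P, Q in \hat E_n. *)
Definition mulE (P Q : op) : op := fun r b a =>
  \sum_(u \in [set: index4]%classic)
    (let: (k, i, b1, a1) := u in
     if [forall j, (b1 j <= b j)%N] && [forall j, (a1 j <= a j)%N] then
       P k b1 a1 * (\prod_(j < n) gbinom (k j) (i j)) *
       Q [ffun j => r j - k j + (i j)%:Z]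
         [ffun j => (b j - b1 j)%N] [ffun j => (a j - a1 j + i j)%N] *
       \prod_(j < n) (((a j - a1 j + i j) ^_ (i j))%N)%:R
     else 0).

End Defs.

(* Main.v *)
Require Import Defs.
From HB Require Import structures.
From mathcomp Require Import all_boot all_order all_algebra.
From mathcomp Require Import zify.
From mathcomp Require Import boolp classical_sets functions fsbigop.
Set Implicit Arguments. Unset Strict Implicit. Unset Printing Implicit Defensive.
Import Order.TTheory GRing.Theory Num.Theory.
Local Open Scope classical_set_scope.
Local Open Scope ring_scope.

Section S.
Variables (K : fieldType) (m n : nat).

Lemma upsilon_le (P : series K m n) b a : P b a != 0 -> (upsilon P <= tdeg b a)%N.
Proof.
move=> Hne; rewrite /upsilon; case: pselect => [h|h].
  case: ex_minnP => d Hd Hmin; apply: Hmin; apply/asboolP; by exists b, a.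
exfalso; apply: h; exists (tdeg b a); apply/asboolP; by exists b, a.
Qed.

Lemma upsilon_att (P : series K m n) : P <> @zero_series K m n ->
  exists b a, P b a != 0 /\ tdeg b a = upsilon P.
Proof.
move=> Hne; rewrite /upsilon; case: pselect => [h|h].
  case: ex_minnP => d /asboolP [b [a [Hd Hb]]] _; by exists b, a.
exfalso; apply: Hne; apply/functional_extensionality_dep => b.
apply/functional_extensionality_dep => a; apply/eqP/negPn/negP => Hb.
apply: h; exists (tdeg b a); apply/asboolP; by exists b, a.
Qed.

Lemma gbinom0 (s : int) : gbinom K s 0 = 1.
Proof. by rewrite /gbinom big_ord0 fact0 divr1. Qed.

Lemma gbinom_small (k i : nat) : (k < i)%N -> gbinom K k%:Z i = 0.
Proof.
move=> hk; rewrite /gbinom (bigD1 (Ordinal hk)) //= subrr mul0r mul0r //.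
Qed.

Lemma fsum0 (I : choiceType) (F : I -> K) :
  (forall u, F u = 0) -> \sum_(u \in [set: I]) F u = 0.
Proof. by move=> H; apply: fsbig1 => u _; apply: H. Qed.

Lemma fsum_nz (I : choiceType) (F : I -> K) :
  \sum_(u \in [set: I]) F u != 0 -> exists u, F u != 0.
Proof.
move=> H; apply/not_existsP => H2; move/eqP: H; apply; apply: fsum0 => u.
by apply/eqP/negPn/negP => Hu; apply: (H2 u).
Qed.

Lemma fsum1 (I : choiceType) (F : I -> K) u0 :
  (forall u, u <> u0 -> F u = 0) -> \sum_(u \in [set: I]) F u = F u0.
Proof.
move=> H; rewrite -(fsbig_widen [set u0]) ?fsbig_set1 //.
by move=> u [_ /= Hu]; apply: H.
Qed.

Lemma fsum_reindex (I : choiceType) (D : set I) (h : I -> I) (F G : I -> K) :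
  set_inj D h -> (forall u, ~ D u -> F u = 0) ->
  (forall v, ~ (h @` D) v -> G v = 0) -> (forall u, D u -> F u = G (h u)) ->
  \sum_(u \in [set: I]) F u = \sum_(u \in [set: I]) G u.
Proof.
move=> hinj HF HG HFG.
rewrite -(fsbig_widen D) //; last by move=> u [_ Hu]; apply: HF.
rewrite -[RHS](fsbig_widen (h @` D)) //; last by move=> u [_ Hu]; apply: HG.
rewrite fsbig_image //; apply: eq_fsbigr => u; rewrite inE => Du; apply: HFG; exact: Du.
Qed.


Lemma mdeg_sub p (b b1 : mon p) : [forall j, (b1 j <= b j)%N] ->
  (mdeg [ffun j => (b j - b1 j)%N] + mdeg b1 = mdeg b)%N.
Proof.
move=> /forallP H; rewrite /mdeg -big_split /=; apply: eq_bigr => j _.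
by rewrite ffunE subnK.
Qed.

Lemma mdeg_subi p (a a1 : mon p) (i : {ffun 'I_p -> nat}) : [forall j, (a1 j <= a j)%N] ->
  (mdeg [ffun j => (a j - a1 j + i j)%N] + mdeg a1 = mdeg a + mdeg i)%N.
Proof.
move=> /forallP H; rewrite /mdeg -!big_split /=; apply: eq_bigr => j _.
by rewrite ffunE -addnA [(i j + _)%N]addnC addnA subnK.
Qed.

Lemma idx_abs_l (r k : idx n) (i : {ffun 'I_n -> nat}) :
  idx_abs [ffun j => r j - k j + (i j)%:Z] = idx_abs r - idx_abs k + (mdeg i)%:Z.
Proof.
rewrite /idx_abs /mdeg -natz natr_sum -sumrB -big_split /=; apply: eq_bigr => j _.
rewrite ffunE natz; done.
Qed.

Lemma ord_mul (P Q : op K m n) N1 N2 : ord_le P N1 -> ord_le Q N2 ->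
  ord_le (mulE P Q) (N1 + N2).
Proof.
move=> HP HQ r Hr.
have [b [a [Hba Hup]]] := upsilon_att Hr.
rewrite -Hup.
have [[[[k i] b1] a1] Hu] := fsum_nz Hba.
move: Hu => /=.
case: ifP => [/andP [Hb Ha]|]; last by rewrite eqxx.
rewrite !mulf_eq0 !negb_or => /andP [/andP [/andP [HPk _] HQl] _].
have HPk' : P k <> @zero_series K m n by move=> E; move: HPk; rewrite E eqxx.
have HQl' : Q [ffun j => r j - k j + (i j)%:Z] <> @zero_series K m n
  by move=> E; move: HQl; rewrite E eqxx.
have h1 := HP _ HPk'. have h2 := HQ _ HQl'.
have u1 := upsilon_le HPk.
have u2 : (upsilon (Q [ffun j => (r j - k j + (i j)%:Z)%R]) <= tdeg [ffun j => (b j - b1 j)%N] [ffun j => (a j - a1 j + i j)%N])%N := upsilon_le HQl.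
move: h1 h2 u1 u2; generalize (upsilon (P k)) (upsilon (Q [ffun j => r j - k j + (i j)%:Z])) => x1 x2 h1 h2 u1 u2.
move: h2; rewrite idx_abs_l => h2.
move: u2; rewrite /tdeg => u2. move: u1; rewrite /tdeg => u1.
have e1 := mdeg_sub Hb. have e2 := mdeg_subi i Ha.
rewrite /tdeg.
move: u2 e1 e2; set B2 := mdeg [ffun j => _]; set A2 := mdeg [ffun j => _]; move=> u2 e1 e2.
lia.
Qed.


Definition upd (l : idx n) (t : 'I_n) (s : int) : idx n :=
  [ffun j => if j == t then s else l j].

Lemma idx_abs_upd l t s : idx_abs (upd l t s) = idx_abs l - l t + s.
Proof.
rewrite /idx_abs (bigD1 t) //= [in RHS](bigD1 t) //= ffunE eqxx.
rewrite (eq_bigr (fun j => l j)); last by move=> j /negbTE Hj; rewrite ffunE Hj.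
by rewrite [l t + _]addrC addrK addrC.
Qed.

Lemma ord_coef_d (Q : op K m n) N t s : ord_le Q N -> ord_le (coef_d Q t s) (N - s).
Proof.
move=> HQ l; rewrite /coef_d; case: ifP => [/eqP Hl|]; last by [].
move=> H; have := HQ _ H; rewrite -/(upd l t s) idx_abs_upd Hl.
move=> h; lia.
Qed.

Lemma ar1 (lt : int) (kt it : nat) : lt < 0 -> (it <= kt)%N -> lt - kt%:Z + it%:Z < 0.
Proof. lia. Qed.

Lemma ar2 (L1 L2 lt kt : int) (it : nat) : L1 + L2 < lt -> kt <= L1 -> L2 < lt - kt + it%:Z.
Proof. lia. Qed.

Lemma prod0 (F : 'I_n -> K) t : F t = 0 -> \prod_(j < n) F j = 0.
Proof. by move=> H; rewrite (bigD1 t) //= H mul0r. Qed.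

Lemma zs (S : series K m n) b a : S = @zero_series K m n -> S b a = 0.
Proof. by move=> ->. Qed.

Lemma inE_mul (P Q : op K m n) N1 N2 : Defs.inE P -> Defs.inE Q -> ord_le P N1 -> ord_le Q N2 ->
  Defs.inE (mulE P Q).
Proof.
move=> [P1 [L1 P2] P3] [Q1 [L2 Q2] Q3] HP HQ; split.
- move=> l t Ht Hl; apply/functional_extensionality_dep => b.
  apply/functional_extensionality_dep => a; apply: fsum0 => -[[[k i] b1] a1] /=.
  case: ifP => // _.
  case: (ltrP (k t) 0) => Hk; first by rewrite (zs _ _ (P1 _ _ Ht Hk)) !mul0r.
  have [kt Ekt] : exists kt : nat, k t = kt%:Z by move: Hk; case: (k t) => // kt _; exists kt.
  case: (ltnP kt (i t)) => Hi.
    by rewrite (prod0 (t:=t)) ?mulr0 ?mul0r // Ekt gbinom_small.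
  rewrite (zs _ _ (Q1 _ _ Ht _)) ?mulr0 ?mul0r //.
  by rewrite ffunE Ekt; apply: ar1 Hl Hi.
- exists (L1 + L2) => l t Ht Hl; apply/functional_extensionality_dep => b.
  apply/functional_extensionality_dep => a; apply: fsum0 => -[[[k i] b1] a1] /=.
  case: ifP => // _.
  case: (ltrP L1 (k t)) => Hk; first by rewrite (zs _ _ (P2 _ _ Ht Hk)) !mul0r.
  rewrite (zs _ _ (Q2 _ _ Ht _)) ?mulr0 ?mul0r //.
  by rewrite ffunE; apply: ar2 Hl Hk.
- move=> t Ht s; exists (N1 + N2 - s); apply: ord_coef_d; exact: ord_mul.
Qed.


Lemma ar3 (a b s kt : int) (it : nat) : a + b < s -> kt <= a -> b < s - kt + it%:Z.
Proof. lia. Qed.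
Lemma ar4 (lt kt : int) (it : nat) : kt = 0 -> lt != 0 -> lt - kt + it%:Z = 0 -> (0 < it)%N.
Proof. move=> -> /eqP; lia. Qed.
Lemma ar5 (a b kt : int) (it : nat) : kt <= a -> (a + b) - kt + it%:Z <= b -> kt = a /\ it = 0%N.
Proof. lia. Qed.
Lemma ar6 (a b : int) : (a + b) - a + 0%N%:Z = b.
Proof. lia. Qed.
Lemma ar7 (lt kt : int) (it : nat) : lt = 0 -> kt = 0 -> it != 0%N -> lt - kt + it%:Z != 0.
Proof. move=> -> -> /eqP; lia. Qed.
Lemma ar8 (a b : int) (it : nat) : it != 0%N -> b < (a + b) - a + it%:Z.
Proof. move/eqP; lia. Qed.

Definition pk (u : index4 m n) : idx n := u.1.1.1.

Lemma coef_bound (P : op K m n) t a :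
  (forall s, a < s -> coef_d P t s = @zero_op K m n) -> forall l : idx n, a < l t -> P l = @zero_series K m n.
Proof.
move=> H l Hl; have := H _ Hl.
move/(congr1 (fun f => f (upd l t 0))); rewrite /coef_d ffunE eqxx /=.
have -> // : [ffun j => if j == t then l t else upd l t 0 j] = l.
by apply/ffunP => j; rewrite !ffunE; case: eqP => [->|].
Qed.

Lemma coef_mul_hi (P Q : op K m n) t a b :
  (forall l : idx n, a < l t -> P l = @zero_series K m n) ->
  (forall l : idx n, b < l t -> Q l = @zero_series K m n) ->
  forall s, a + b < s -> coef_d (mulE P Q) t s = @zero_op K m n.
Proof.
move=> HP HQ s Hs; apply/functional_extensionality_dep => l; rewrite /coef_d.
case: ifP => // _; apply/functional_extensionality_dep => b'.
apply/functional_extensionality_dep => a'; apply: fsum0 => -[[[k i] b1] a1] /=.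
case: ifP => // _.
case: (ltrP a (k t)) => Hk; first by rewrite (zs _ _ (HP _ Hk)) !mul0r.
rewrite (zs _ _ (HQ _ _)) ?mulr0 ?mul0r //.
by rewrite !ffunE eqxx; apply: ar3 Hs Hk.
Qed.

Lemma coef_mul_eq (P Q : op K m n) t a b :
  (forall l : idx n, a < l t -> P l = @zero_series K m n) ->
  (forall l : idx n, b < l t -> Q l = @zero_series K m n) ->
  coef_d (mulE P Q) t (a + b) = mulE (coef_d P t a) (coef_d Q t b).
Proof.
move=> HP HQ; apply/functional_extensionality_dep => l.
case Hlt: (l t == 0).
2:{ rewrite {1}/coef_d Hlt; apply/functional_extensionality_dep => b'.
  apply/functional_extensionality_dep => a'; apply/esym; apply: fsum0 => -[[[k i] b1] a1] /=.
  case: ifP => // _.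
  rewrite {1}/coef_d; case: ifP => Hk; last by rewrite !mul0r.
  rewrite {1}/coef_d; case: ifP => Hq; last by rewrite mulr0 !mul0r.
  rewrite (prod0 (t:=t)) ?mulr0 ?mul0r //.
  rewrite (eqP Hk); apply: gbinom_small.
  move: Hq; rewrite ffunE => /eqP Hq.
  by apply: ar4 (eqP Hk) (negbT Hlt) Hq. }
rewrite {1}/coef_d Hlt; apply/functional_extensionality_dep => b'.
apply/functional_extensionality_dep => a'; apply/esym; rewrite /mulE.
apply: (@fsum_reindex (index4 m n) [set u | pk u t = 0]
   (fun u => (upd (pk u) t a, u.1.1.2, u.1.2, u.2))).
- move=> [[[k i] b1] a1] [[[k' i'] b1'] a1']; rewrite !in_setE /pk /= => Hk Hk' [] E -> -> ->.
  congr (_, _, _, _); apply/ffunP => j.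
  have := congr1 (fun f : idx n => f j) E; rewrite !ffunE.
  case: (eqVneq j t) => [->|//]; by rewrite Hk Hk'.
- move=> [[[k i] b1] a1] /= Hk; case: ifP => // _.
  rewrite {1}/coef_d; have -> : (k t == 0) = false by apply/eqP.
  by rewrite !mul0r.
- move=> [[[k i] b1] a1] Hnot /=; case: ifP => // _.
  case: (ltrP a (k t)) => Hk; first by rewrite (zs _ _ (HP _ Hk)) !mul0r.
  case: (ltrP b (upd l t (a + b) t - k t + (i t)%:Z)) => Hq.
    by rewrite (zs _ _ (HQ _ _)) ?mulr0 ?mul0r // ffunE.
  move: Hq; rewrite ffunE eqxx => Hq.
  have [Ek Ei] := ar5 Hk Hq.
  exfalso; apply: Hnot; exists (upd k t 0, i, b1, a1); first by rewrite /= ffunE eqxx.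
  congr (_, _, _, _); apply/ffunP => j; rewrite !ffunE.
  by case: (eqVneq j t) => [->|]; rewrite ?Ek.
- move=> [[[k i] b1] a1]; rewrite /pk /upd /= => Hk; case: ifP => // _.
  rewrite {1}/coef_d Hk eqxx.
  case: (eqVneq (i t) 0%N) => Hi.
  + congr (_ * _ * _ * _).
    * apply: eq_bigr => j _; rewrite ffunE.
      by case: (eqVneq j t) => [->|]; rewrite ?Hk ?Hi ?gbinom0.
    * rewrite /coef_d ifT; last by rewrite ffunE (eqP Hlt) Hk Hi.
      congr Q; apply/ffunP => j; rewrite !ffunE.
      case: (eqVneq j t) => [->|Hj]; rewrite ?eqxx ?Hi ?ar6 //.
  + rewrite {1}/coef_d ifN; last by rewrite ffunE; apply: ar7 (eqP Hlt) Hk Hi.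
    rewrite (zs _ _ (HQ _ _)) ?mulr0 ?mul0r //.
    by rewrite !ffunE eqxx; apply: ar8.
Qed.


Definition lexle p (u v : mon p) :=
  forall j : 'I_p, (forall i : 'I_p, (i < j)%N -> u i = v i) -> (u j <= v j)%N.

Lemma lex_cancel p (u v u' v' : mon p) : lexle u u' -> lexle v v' ->
  (forall j, u j + v j = u' j + v' j)%N -> u = u' /\ v = v'.
Proof.
move=> Hu Hv Hs.
suff H : forall J (j : 'I_p), (j < J)%N -> u j = u' j /\ v j = v' j.
  by split; apply/ffunP => j; have [] := H j.+1 j (ltnSn _).
elim=> [//|J IH] j; rewrite ltnS leq_eqVlt => /orP [/eqP Ej|Hj]; last by apply: IH.
have Hpre : forall i : 'I_p, (i < j)%N -> u i = u' i /\ v i = v' i.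
  by move=> i Hi; apply: IH; rewrite -Ej.
have h1 := Hu j (fun i Hi => (Hpre i Hi).1).
have h2 := Hv j (fun i Hi => (Hpre i Hi).2).
have h3 := Hs j. split; lia.
Qed.

Lemma lex_min p (S : mon p -> Prop) : (exists u, S u) ->
  exists u, S u /\ forall v, S v -> lexle u v.
Proof.
move=> Hne.
suff H : forall J, exists u, S u /\ forall v, S v -> forall j : 'I_p, (j < J)%N ->
    (forall i : 'I_p, (i < j)%N -> u i = v i) -> (u j <= v j)%N.
  have [u [Su Hu]] := H p; exists u; split => // v Sv j; exact: Hu v Sv j (ltn_ord j).
elim=> [|J [u [Su Hu]]]; first by case: Hne => u Su; exists u.
case: (ltnP J p) => HJ; last first.
  exists u; split => // v Sv j Hj; apply: Hu => //; apply: leq_trans (ltn_ord j) HJ.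
pose jj := Ordinal HJ.
pose T x := exists v, S v /\ (forall i : 'I_p, (i < J)%N -> v i = u i) /\ v jj = x.
have Tex : exists x, `[< T x >] by exists (u jj); apply/asboolP; exists u.
case: (ex_minnP Tex) => x0 /asboolP [v0 [Sv0 [Hv0 Ev0]]] Hmin.
exists v0; split => // v Sv j; rewrite ltnS leq_eqVlt => /orP [/eqP Ej|Hj] Hpre.
- have -> : j = jj by apply: val_inj.
  rewrite Ev0; apply: Hmin; apply/asboolP; exists v; split => //; split => // i Hi.
  by rewrite -Hpre ?Ej // Hv0.
- rewrite Hv0 //; apply: (Hu v Sv j Hj) => i Hi.
  by rewrite -Hv0 ?(ltn_trans Hi Hj) //; exact: Hpre.
Qed.

Lemma lex2_min (S : mon m -> mon n -> Prop) : (exists b a, S b a) ->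
  exists b a, S b a /\ forall b' a', S b' a' -> lexle b b' /\ (b = b' -> lexle a a').
Proof.
move=> [b0 [a0 H0]].
have [b [[a Sba] Hb]] := @lex_min m (fun b => exists a, S b a) (ex_intro _ b0 (ex_intro _ a0 H0)).
have [a' [Sa Ha]] := @lex_min n (S b) (ex_intro _ a Sba).
exists b, a'; split => // b' a'' S'; split; first by apply: Hb; exists a''.
by move=> E; subst b'; apply: Ha.
Qed.

Definition supp_lev (P : op K m n) (i : nat) :=
  forall l : idx n, (exists j : 'I_n, (i <= j)%N /\ l j != 0) -> P l = @zero_series K m n.

Lemma supp_coef (P : op K m n) i t s : supp_lev P i.+1 -> val t = i ->
  supp_lev (coef_d P t s) i.
Proof.
move=> sP Ht l [j [Hj Hl]]; rewrite /coef_d; case: ifP => // Hlt.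
apply: sP; exists j; rewrite ffunE; case: (eqVneq j t) => [Ejt|Hjt].
  by move: Hl; rewrite Ejt (eqP Hlt) eqxx.
split => //; move: Hj; rewrite leq_eqVlt => /orP [/eqP Eij|//].
by exfalso; move: Hjt; rewrite -(inj_eq val_inj) /= Ht Eij eqxx.
Qed.

Lemma ex_nz (l : idx n) : l != [ffun=> 0] -> exists j, l j != 0.
Proof.
move=> Hl; case/boolP: [forall j, l j == 0] => [/forallP H|/forallPn [j Hj]].
  have El : l = [ffun=> 0] by apply/ffunP => j; rewrite ffunE (eqP (H j)).
  by rewrite El eqxx in Hl.
by exists j.
Qed.

Lemma ex_nzn (l : {ffun 'I_n -> nat}) : l != [ffun=> 0%N] -> exists j, l j != 0%N.
Proof.
move=> Hl; case/boolP: [forall j, l j == 0%N] => [/forallP H|/forallPn [j Hj]].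
  have El : l = [ffun=> 0%N] by apply/ffunP => j; rewrite ffunE (eqP (H j)).
  by rewrite El eqxx in Hl.
by exists j.
Qed.


Lemma base_nz (R : op K m n) : supp_lev R 0 -> R <> @zero_op K m n ->
  exists b a, R [ffun=> 0] b a != 0.
Proof.
move=> sR nR; apply/not_existsP => H; apply: nR.
apply/functional_extensionality_dep => l.
case: (eqVneq l [ffun=> 0]) => [->|Hl].
  apply/functional_extensionality_dep => b; apply/functional_extensionality_dep => a.
  apply/eqP/negPn/negP => Hb; apply: (H b); by exists a.
apply: sR; have [j Hj] := ex_nz Hl; by exists j.
Qed.

Lemma base_mul (P Q : op K m n) : supp_lev P 0 -> supp_lev Q 0 ->
  P <> @zero_op K m n -> Q <> @zero_op K m n -> mulE P Q <> @zero_op K m n.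
Proof.
move=> sP sQ nP nQ.
have [b1 [a1 [H1 L1]]] := lex2_min (base_nz sP nP).
have [b2 [a2 [H2 L2]]] := lex2_min (base_nz sQ nQ).
pose B : mon m := [ffun j => (b1 j + b2 j)%N].
pose A : mon n := [ffun j => (a1 j + a2 j)%N].
move=> E; have := congr1 (fun F => F [ffun=> 0] B A) E.
rewrite /zero_op /zero_series; apply/eqP.
rewrite /mulE (@fsum1 _ _ ((([ffun=> 0] : idx n), ([ffun=> 0%N] : {ffun 'I_n -> nat}), b1, a1) : index4 m n)) /=.
- rewrite ifT; last first.
    by apply/andP; split; apply/forallP => j; rewrite ffunE leq_addr.
  rewrite (eq_bigr (fun _ => 1)); last by move=> j _; rewrite !ffunE gbinom0.
  rewrite [X in _ * X](eq_bigr (fun _ => 1)); last by move=> j _; rewrite !ffunE ffactn0.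
  rewrite !big1_eq mulr1 mulr1.
  have -> : [ffun j => ([ffun=> 0] : idx n) j - ([ffun=> 0] : idx n) j + (([ffun=> 0%N] : {ffun 'I_n -> nat}) j)%:Z] = [ffun=> 0].
    by apply/ffunP => j; rewrite !ffunE subrr.
  have -> : [ffun j => (B j - b1 j)%N] = b2 by apply/ffunP => j; rewrite !ffunE addKn.
  have -> : [ffun j => (A j - a1 j + ([ffun=> 0%N] : {ffun 'I_n -> nat}) j)%N] = a2.
    by apply/ffunP => j; rewrite !ffunE addn0 addKn.
  exact: mulf_neq0.
- move=> [[[k i] b] a] Hne /=; case: ifP => // /andP [/forallP Hb /forallP Ha].
  case: (eqVneq k [ffun=> 0]) => [Ek|Hk]; last first.
    by rewrite (zs _ _ (sP _ _)) ?mul0r //; have [j Hj] := ex_nz Hk; by exists j.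
  case: (eqVneq i [ffun=> 0%N]) => [Ei|Hi]; last first.
    have [j Hj] := ex_nzn Hi.
    rewrite (prod0 (t:=j)) ?mulr0 ?mul0r // Ek ffunE; apply: gbinom_small.
    by rewrite lt0n.
  subst k i.
  have -> : [ffun j => ([ffun=> 0] : idx n) j - ([ffun=> 0] : idx n) j + (([ffun=> 0%N] : {ffun 'I_n -> nat}) j)%:Z] = [ffun=> 0].
    by apply/ffunP => j; rewrite !ffunE subrr.
  have -> : [ffun j => (A j - a j + ([ffun=> 0%N] : {ffun 'I_n -> nat}) j)%N] = [ffun j => (A j - a j)%N].
    by apply/ffunP => j; rewrite !ffunE addn0.
  case: (eqVneq (P [ffun=> 0] b a) 0) => [->|HPb]; first by rewrite !mul0r.
  case: (eqVneq (Q [ffun=> 0] [ffun j => (B j - b j)%N] [ffun j => (A j - a j)%N]) 0) => [->|HQb].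
    by rewrite mulr0 mul0r.
  exfalso; apply: Hne.
  have [lb1 lb2] := L1 _ _ HPb.
  have [lc1 lc2] := L2 _ _ HQb.
  have [Eb Eb2] : b1 = b /\ b2 = [ffun j => (B j - b j)%N].
    apply: lex_cancel lb1 lc1 _ => j; have := Hb j; rewrite !ffunE => h; by rewrite subnKC.
  have [Ea _] : a1 = a /\ a2 = [ffun j => (A j - a j)%N].
    apply: lex_cancel (lb2 Eb) (lc2 Eb2) _ => j; have := Ha j; rewrite !ffunE => h; by rewrite subnKC.
  by rewrite Eb Ea.
Qed.


Lemma hasOrdG_mul i : forall (P Q : op K m n) k1 k2, supp_lev P i -> supp_lev Q i ->
  hasOrdG i P k1 -> hasOrdG i Q k2 -> hasOrdG i (mulE P Q) (idx_add k1 k2).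
Proof.
elim: i => [|i IH] P Q k1 k2 sP sQ hP hQ /=; first exact: base_mul.
move=> t Ht; have [hP1 hP2] := hP t Ht; have [hQ1 hQ2] := hQ t Ht.
have bP := coef_bound hP1; have bQ := coef_bound hQ1.
rewrite /idx_add ffunE (coef_mul_eq bP bQ); split; first exact: coef_mul_hi bP bQ.
by apply: IH => //; apply: supp_coef.
Qed.

Lemma supp_top (P : op K m n) : supp_lev P n.
Proof. by move=> l [j [Hj _]]; move: (ltn_ord j); rewrite ltnNge Hj. Qed.

End S.

Theorem mainTheorem2 (K : fieldType) (hK : [pchar K] =i pred0) (m n : nat)
    (hn : (0 < n)%N) (P1 P2 : op K m n) :
  A1 P1 -> A1 P2 ->
  A1 (mulE P1 P2) /\
  (forall k1 k2 : idx n, ordG P1 k1 -> ordG P2 k2 ->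
     ordG (mulE P1 P2) (idx_add k1 k2)).
Proof.
move=> [k1' [[iP1 hP1'] oP1]] [k2' [[iP2 hP2'] oP2]].
have ordG_mul : forall k1 k2, ordG P1 k1 -> ordG P2 k2 -> ordG (mulE P1 P2) (idx_add k1 k2).
  move=> k1 k2 [i1 h1] [i2 h2]; split; first exact: inE_mul i1 i2 oP1 oP2.
  by apply: hasOrdG_mul => //; apply: supp_top.
split; last exact: ordG_mul.
exists (idx_add k1' k2'); split; first by apply: ordG_mul.
have -> : idx_abs (idx_add k1' k2') = idx_abs k1' + idx_abs k2'.
  by rewrite /idx_abs -big_split; apply: eq_bigr => j _; rewrite ffunE.
exact: ord_mul.
Qed.
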